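(* Let $0<\delta<\frac34$ and suppose there is a constant $C_0>0$ such that for every finite field $F_q$ of odd characteristic and all $f_1,f_2:F_q\to\mathbb{C}$, $$\big\|\mathcal{A}(f_1,f_2)-\mathbb{E}[f_1]\mathbb{E}[f_2]\big\|_2\leq C_0\,q^{-\delta}\|f_1\|_2\|f_2\|_2 .$$ Then there is a constant $C>0$ such that for every finite field $F_q$ of odd characteristic and every $A\subset F_q$ with $|A|\geq C q^{1-\frac23\delta}$, there exist $x,y\in F_q$ with $y\neq0$ and $x,\,x+y,\,x+y^2\in A$. In particular, taking $\delta=\frac14$, an estimate of this form with $\delta=\frac14$ implies that every $A\subset F_q$ with $|A|\geq Cq^{5/6}$ contains such a configuration.
   Context: For $f:F_q\to\mathbb{C}$, $\mathbb{E}[f]=\frac1q\sum_{x\in F_q}f(x)$, $\|f\|_r=\big(\frac1q\sum_{x\in F_q}|f(x)|^r\big)^{1/r}$, and $\mathcal{A}(f_1,f_2)(x)=\frac1q\sum_{y\in F_q}f_1(x+y)f_2(x+y^2)$. *)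

(* Defs.v *)
From mathcomp Require Import all_boot all_algebra all_field.
From mathcomp Require Import all_classical all_reals all_analysis.
From mathcomp.real_closed Require Import complex.
Import GRing.Theory Num.Theory.
Local Open Scope ring_scope.
Local Open Scope complex_scope.

Section FiniteFieldAverages.
Variables (R : realType) (F : finFieldType).

Definition qF : R := #|F|%:R.

Definition cabs2 (z : R[i]) : R := complex.Re z ^+ 2 + complex.Im z ^+ 2.

Definition expect (f : F -> R[i]) : R[i] :=
  (qF%:C)^-1 * \sum_(x : F) f x.

Definition norm2 (f : F -> R[i]) : R :=
  Num.sqrt (qF^-1 * \sum_(x : F) cabs2 (f x)).

Definition avgA (f1 f2 : F -> R[i]) (x : F) : R[i] :=
  (qF%:C)^-1 * \sum_(y : F) f1 (x + y) * f2 (x + y ^+ 2).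

End FiniteFieldAverages.

Definition odd_char (F : finFieldType) : Prop := ~~ (2%N \in [pchar F]).

Arguments cabs2 {R}.
Arguments expect {R F}.
Arguments norm2 {R F}.
Arguments avgA {R F}.

(* Main.v *)
Require Import Defs.
From mathcomp Require Import all_boot all_algebra all_field.
From mathcomp Require Import all_classical all_reals all_analysis.
From mathcomp.real_closed Require Import complex.
From mathcomp Require Import ring lra.
Import GRing.Theory Num.Theory.
Import GRing.Theory Num.Theory.
Local Open Scope ring_scope.
Lemma norm2_real (R : realType) (F : finFieldType) (G : F -> R) :
  norm2 (fun x => (G x)%:C%C) = Num.sqrt ((qF R F)^-1 * \sum_(x : F) G x ^+ 2).
Proof.
rewrite /norm2; congr (Num.sqrt (_ * _)); apply: eq_bigr => x _.
by rewrite /cabs2 /= expr0n addr0.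
Qed.
Lemma amgm_sum (R : realType) (F : finType) (u G : F -> R) (t : R) :
  (forall x, u x ^+ 2 = u x) -> 0 < t ->
  - (2 * t * \sum_x u x * G x) <= t ^+ 2 * \sum_x u x + \sum_x G x ^+ 2.
Proof.
move=> hu ht.
rewrite mulr_sumr -sumrN mulr_sumr -big_split /=; apply: ler_sum => x _.
have h2 := hu x; have := sqr_ge0 (t * u x + G x).
have -> : (t * u x + G x) ^+ 2 = t ^+ 2 * u x ^+ 2 + 2 * t * (u x * G x) + G x ^+ 2 by ring.
rewrite h2; lra.
Qed.
Lemma avg_real (R : realType) (F : finFieldType) (u : F -> R) x :
  avgA (fun x => (u x)%:C%C) (fun x => (u x)%:C%C) x
  = ((qF R F)^-1 * \sum_y u (x + y) * u (x + y ^+ 2))%:C%C.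
Proof. rewrite /avgA.
rewrite (rmorphM (real_complex R)).
rewrite (fmorphV (real_complex R)).
rewrite (rmorph_sum (real_complex R)).
congr (_ * _); apply: eq_bigr => y _; by rewrite (rmorphM (real_complex R)).
Qed.
Lemma expect_real (R : realType) (F : finFieldType) (u : F -> R) :
  expect (fun x => (u x)%:C%C) = ((qF R F)^-1 * \sum_y u y)%:C%C.
Proof. by rewrite /expect (rmorphM (real_complex R)) (fmorphV (real_complex R)) (rmorph_sum (real_complex R)). Qed.
Lemma final_num (R : realType) (C0 q w a S X N : R) :
 0 < C0 -> 1 <= q -> 0 < w -> 1 <= q * w^+4 ->
 (16*C0^+2+2) * (q * w^+2) <= a ->
 q^-1 * S <= (C0 * w^+3 * (q^-1 * a))^+2 ->
 (forall t, 0 < t -> -(2*t*X) <= t^+2 * a + S) ->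
 X = q^-1 * N - a * (q^-1*a)^+2 ->
 a < N.
Proof.
move=> C0p q1 w0 qw4 hA hS hX hXN.
set C := 16*C0^+2+2 in hA.
set r := q^-1 in hS hXN.
have hCdef : C = 16*C0^+2+2 by []. 
have hrdef : r = q^-1 by [].
clearbody C r.
have q0 : 0 < q by lra.
have qr : q * r = 1 by rewrite hrdef mulfV // lt0r_neq0.
have r0 : 0 < r by rewrite hrdef invr_gt0.
have hC0 : 0 <= C0^+2 by apply: sqr_ge0.
have h1 : 2 <= C by rewrite hCdef; lra.
have h2 : 0 < q * w^+2 by apply: mulr_gt0 => //; apply: exprn_gt0 => //.
have ha0 : 0 < a.
  have : 2 * (q*w^+2) <= C * (q*w^+2) by rewrite ler_pM2r.
  lra.
have h4 : 4 * q <= a^+2.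
  have e : (C*(q*w^+2))^+2 = C^+2 * q * (q * w^+4) by ring.
  have : (C*(q*w^+2))^+2 <= a^+2 by rewrite ler_pXn2r // ?nnegrE; nra.
  rewrite e => h.
  have hC2 : 4 <= C^+2 by nra.
  have : 4 * q * 1 <= C^+2 * q * (q*w^+4).
    apply: ler_pM => //; first by nra.
    by rewrite ler_pM2r.
  lra.
have h5 : 16*C0^+2*(q^+3*w^+6) <= a^+3.
  have e : (C*(q*w^+2))^+3 = C^+3 * (q^+3 * w^+6) by ring.
  have : (C*(q*w^+2))^+3 <= a^+3 by rewrite ler_pXn2r // ?nnegrE; nra.
  rewrite e => h.
  have hq3 : 0 < q^+3 * w^+6 by apply: mulr_gt0; apply: exprn_gt0 => //.
  have hC3 : 16 * C0^+2 <= C^+3 by rewrite hCdef; nra.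
  nra.
have hS' : S <= C0^+2 * w^+6 * r * a^+2.
  have : q * (r * S) <= q * (C0 * w^+3 * (r * a))^+2 by rewrite ler_pM2l.
  have -> : q * (r * S) = S by rewrite mulrA qr mul1r.
  have -> : q * (C0 * w^+3 * (r * a))^+2 = (q * r) * (C0^+2 * w^+6 * r * a^+2) by ring.
  by rewrite qr mul1r.
pose t := a^+2 * r^+2 / 4.
have t0 : 0 < t by rewrite /t; apply: divr_gt0 => //; apply: mulr_gt0; apply: exprn_gt0 => //.
have hS'' : S <= t^+2 * a.
  suff : C0^+2 * w^+6 * r * a^+2 <= t^+2 * a by lra.
  have e1 : C0^+2 * w^+6 * r * a^+2 = (16*C0^+2*(q^+3*w^+6)) * (a^+2 * r^+4 / 16).
    have qn0 : q != 0 by exact: lt0r_neq0.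
    by rewrite hrdef; field.
  have e2 : t^+2 * a = a^+3 * (a^+2 * r^+4 / 16) by rewrite /t; field.
  rewrite e1 e2 ler_pM2r //; apply: divr_gt0 => //; apply: mulr_gt0; apply: exprn_gt0 => //.
have hX' := hX t t0.
have hXt : - X <= t * a.
  have e3 : - (2 * t * X) = (2 * t) * (- X) by ring.
  have e4 : t ^+ 2 * a = t * (t * a) by ring.
  have e5 : (2 * t) * (t * a) = t * (t * a) + t * (t * a) by ring.
  rewrite e4 in hX' hS''.
  have : (2 * t) * (- X) <= (2 * t) * (t * a) by rewrite -e3 e5; lra.
  by rewrite ler_pM2l // mulr_gt0.
have qn0 : q != 0 by exact: lt0r_neq0.
have eN : N = q * X + a^+3 * r by rewrite hXN hrdef; field.
have eta : q * (t * a) = a^+3 * r / 4 by rewrite /t hrdef; field.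
have h6 : 4 * a <= a^+3 * r.
  have -> : a^+3 * r = a * (a^+2 * r) by ring.
  have : 4 * q * r <= a^+2 * r by rewrite ler_pM2r.
  rewrite -mulrA qr mulr1 => h; nra.
have hqX : - (q * X) <= q * (t * a) by rewrite -mulrN ler_pM2l.
rewrite eta in hqX.
lra.
Qed.

Theorem lemma1p3 (R : realType) (delta : R) :
  0 < delta -> delta < 3 / 4 ->
  (exists C0 : R, 0 < C0 /\
     forall (F : finFieldType), odd_char F ->
     forall f1 f2 : F -> R[i],
       norm2 (fun x => avgA f1 f2 x - expect f1 * expect f2)
         <= C0 * (qF R F) `^ (- delta) * norm2 f1 * norm2 f2) ->
  exists C : R, 0 < C /\
    forall (F : finFieldType), odd_char F ->
    forall A : {set F},
      C * (qF R F) `^ (1 - 2 / 3 * delta) <= #|A|%:R ->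
      exists x y : F, y != 0 /\ x \in A /\ x + y \in A /\ x + y ^+ 2 \in A.
Proof.
move=> d0 d34 [C0 [C0p HC0]].
exists (16 * C0^+2 + 2); split; first by have := sqr_ge0 C0; lra.
move=> F oF A hA.
set q := qF R F in HC0 hA *.
have q1 : 1 <= q by rewrite /q /qF ler1n; apply/card_gt0P; exists 0.
have q0 : 0 < q by lra.
have qn0 : q != 0 by exact: lt0r_neq0.
pose w := q `^ (- (delta / 3)).
have w0 : 0 < w by apply: powR_gt0.
have e1 : q `^ (- delta) = w ^+ 3.
  rewrite /w -powR_mulrn ?powR_ge0 // -powRrM; congr (_ `^ _); lra.
have e2 : q `^ (1 - 2 / 3 * delta) = q * w ^+ 2.
  have -> : 1 - 2 / 3 * delta = 1 + (- (delta / 3)) * 2%:R by lra.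
  rewrite powRD; last by apply/implyP => _.
  by rewrite powRr1 ?ltW // powRrM powR_mulrn ?powR_ge0.
have e3 : 1 <= q * w ^+ 4.
  have -> : q * w ^+ 4 = q `^ (1 + (- (delta / 3)) * 4%:R).
    rewrite powRD; last by apply/implyP => _.
    by rewrite powRr1 ?ltW // powRrM powR_mulrn ?powR_ge0.
  rewrite -[X in X <= _](powRr0 q); apply: ler_powR => //; lra.
set a : R := #|A|%:R in hA *.
pose u := fun x : F => if x \in A then (1:R) else 0.
have hu : forall x, u x ^+ 2 = u x.
  by move=> x; rewrite /u; case: ifP; rewrite ?expr1n ?expr0n.
have ha : \sum_x u x = a by rewrite /u -big_mkcond /= sumr_const.
pose G := fun x : F => q^-1 * \sum_y u (x + y) * u (x + y ^+ 2) - (q^-1 * a) ^+ 2.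
have HG := HC0 F oF (fun x => (u x)%:C%C) (fun x => (u x)%:C%C).
have eqg : (fun x => avgA (fun x => (u x)%:C%C) (fun x => (u x)%:C%C) x -
     expect (fun x => (u x)%:C%C) * expect (fun x => (u x)%:C%C)) = fun x => (G x)%:C%C.
  apply: funext => x; rewrite avg_real expect_real ha /G.
  by rewrite -(rmorphM (real_complex R)) -(rmorphB (real_complex R)) expr2.
rewrite eqg !norm2_real in HG.
have nf : \sum_x u x ^+ 2 = a by under eq_bigr do rewrite hu; exact: ha.
rewrite nf -mulrA -expr2 sqr_sqrtr ?mulr_ge0 ?invr_ge0 ?ler0n ?ltW // e1 in HG.
set S := \sum_x G x ^+ 2 in HG.
have hS : q^-1 * S <= (C0 * w ^+ 3 * (q^-1 * a)) ^+ 2.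
  have s0 := sqrtr_ge0 (q^-1 * S).
  have S0 : 0 <= q^-1 * S by rewrite mulr_ge0 ?invr_ge0 ?ltW // sumr_ge0 // => x _; apply: sqr_ge0.
  rewrite -(sqr_sqrtr S0) ler_pXn2r // nnegrE; lra.
pose N := \sum_x \sum_y u x * (u (x + y) * u (x + y ^+ 2)).
have hXN : \sum_x u x * G x = q^-1 * N - a * (q^-1 * a) ^+ 2.
  rewrite /G; under eq_bigr do rewrite mulrBr; rewrite sumrB -mulr_suml ha.
  congr (_ - _); rewrite /N mulr_sumr; apply: eq_bigr => x _.
  by rewrite mulrCA mulr_sumr.
have hX : forall t, 0 < t -> - (2 * t * \sum_x u x * G x) <= t ^+ 2 * a + S.
  by move=> t t0; rewrite -ha; apply: amgm_sum.
rewrite e2 in hA.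
have hN := @final_num R C0 q w a S _ N C0p q1 w0 e3 hA hS hX hXN.
case: (pselect (exists x y : F, y != 0 /\ x \in A /\ x + y \in A /\ x + y ^+ 2 \in A)) => // Hn.
exfalso.
have z2 : (0 : F) ^+ 2 = 0 by rewrite expr2 mul0r.
have eN : N = a + \sum_x \sum_(y | y != 0) u x * (u (x + y) * u (x + y ^+ 2)).
  rewrite /N -ha -big_split /=; apply: eq_bigr => x _.
  rewrite (bigD1 0) //= z2 addr0.
  by rewrite -expr2 hu -expr2 hu.
have eN' : \sum_x \sum_(y | y != 0) u x * (u (x + y) * u (x + y ^+ 2)) = 0.
  apply: big1 => x _; apply: big1 => y y0.
  rewrite /u; case: ifP => hx; last by rewrite mul0r.
  case: ifP => hy; last by rewrite mul0r mulr0.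
  case: ifP => hz; last by rewrite !mulr0.
  by exfalso; apply: Hn; exists x, y.
rewrite eN eN' addr0 in hN.
lra.
Qed.
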